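(* Fix $\tau\in(0,1)$ and consider the moment function $\rho(y,q)=\tau-\mathbb I[y\le q]$ ($m=0$), so that $q_a^*(x;\tau)$, the $\tau$-quantile of $Y\mid X=x,A=a$, plays the role of $\kappa_a^*$ and the CDTE is the conditional quantile treatment effect $\mathrm{CQTE}(x;\tau)=q_1^*(x;\tau)-q_0^*(x;\tau)$. Assume the conditional distributions of $Y$ given $X=x,A=a$ are continuous. Then the general pseudo-outcome (defined in the context) specializes to $$\psi^{\mathrm{CQTE}}(Z,e,q,f)=q_1(X;\tau)-q_0(X;\tau)+\frac{A-e(X)}{e(X)(1-e(X))}\,\frac{1}{f_A(X)}\big(\tau-\mathbb I[Y\le q_A(X;\tau)]\big),$$ where $f_a$ is a stand-in for $f_a^*(x)=f_{Y\mid X=x,A=a}(q_a^*(x;\tau))$, the conditional density of $Y$ given $X=x,A=a$ evaluated at the conditional quantile. Furthermore, if the Boundedness Assumption (in the context) holds and the cross-fitted nuisance estimates $(\hat e^{(k)},\hat q^{(k)},\hat f^{(k)})$ lie in $\Xi$, then $$\mathcal E\lesssim\sum_{k=1}^K\sum_{a=0}^1\|\hat q_a^{(k)}-q_a^*\|\Big(\|\hat e^{(k)}-e^*\|+\Big\|\frac{1}{\hat f^{(k)}_a}-\frac{1}{f^*_a}\Big\|+\|\hat q^{(k)}_a-q^*_a\|\Big).$$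
   Context: $Z=(X,A,Y)$ with $X\in\mathcal X$, $A\in\{0,1\}$, $Y\in\mathbb R$, $e^*(x)=P(A=1\mid X=x)$; $\|g\|=\mathbb E[g^2]^{1/2}$. $D$ denotes directional derivatives. General setting: for a moment function $\rho:\mathbb R\times\mathbb R^{m+1}\to\mathbb R^{m+1}$, $\rho(y,\nu)$ with $\nu=(\kappa,h)$, $\nu_a^*(x)=(\kappa_a^*(x),h_a^*(x))$ solves $\mathbb E[\rho(Y,\nu)\mid X=x,A=a]=0$; $J_a^*(x)=D_\nu\{\mathbb E[\rho(Y,\nu)\mid X=x,A=a]\}|_{\nu=\nu_a^*(x)}$ (assumed invertible) and $\alpha_a^*(x)$ is the first row of $J_a^*(x)^{-1}$. The pseudo-outcome for stand-ins $(e,\alpha,\nu)$ is $\psi(Z,e,\alpha,\nu)=\kappa_1(X)-\kappa_0(X)-\frac{A-e(X)}{e(X)(1-e(X))}\alpha_A(X)^T\rho(Y,\nu_A(X))$. Cross-fitting: given $n$ i.i.d. copies of $Z$, $K\ge2$ folds $I_k=\{i:i\equiv k-1\pmod K\}$, nuisance estimates $(\hat e^{(k)},\hat\alpha^{(k)},\hat\nu^{(k)})$ built from data outside $I_k$. $\mathcal E=\sum_{k=1}^K\mathcal E(\hat e^{(k)},\hat\alpha^{(k)},\hat\nu^{(k)})$, where $\mathcal E(e,\alpha,\nu)=\sum_{a=0}^1\big(\|\kappa_a-\kappa_a^*\|\|e-e^*\|+\sum_{i,j}G_{ij}\|\alpha_{a,i}-\alpha^*_{a,i}\|\|\nu_{a,j}-\nu^*_{a,j}\|+\sum_{i,j}H_{ij}\|\nu_{a,i}-\nu^*_{a,i}\|\|\nu_{a,j}-\nu^*_{a,j}\|\big)$.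 Boundedness Assumption: for a set $\Xi$ of nuisance realizations, there exist $c_1>0,c_2\ge0,c_3\ge0,c_4>0,c_5\ge0$ and $G,H\in\{0,1\}^{(m+1)\times(m+1)}$ such that for all $(e,\alpha,\nu)\in\Xi$, $a$, $i,j,l$, and $\bar\nu_a$ in the convex hull of $\{\nu_a^*,\nu_a\}$: $e^*(X),e(X)\in[c_1,1-c_1]$; $|D_{\nu_{a,j}}\mathbb E[\rho_i(Y,\nu_a)\mid X,A=a]|_{\nu_a=\bar\nu_a}|\le c_2G_{ij}$; $|D_{\nu_{a,l}}D_{\nu_{a,j}}\mathbb E[\rho_i(Y,\nu_a)\mid X=x,A=a]|_{\nu_a=\bar\nu_a}|\le c_3H_{jl}$; $\det(D_{\nu_a}\{\mathbb E[\rho(Y,\nu_a)\mid X=x,A=a]\}|_{\nu_a=\bar\nu_a})>c_4$; $|\rho_i(Y,\bar\nu_a)|\le c_5$. *)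

(* Defs.v *)
From mathcomp Require Import all_boot all_order all_algebra.
From mathcomp Require Import all_classical all_reals all_analysis.
Import Order.TTheory GRing.Theory Num.Theory.
Import numFieldNormedType.Exports.

Set Implicit Arguments.
Unset Strict Implicit.
Unset Printing Implicit Defensive.

Local Open Scope classical_set_scope.
Local Open Scope ring_scope.

Section CQTE.
Context {R : realType}.

Definition rho_q (tau y q : R) : R := tau - ((y <= q)%R)%:R.

Context {d : measure_display} {X : measurableType d}.

(* The law of Z = (X,A,Y) is parametrized by the law PX of X, the
   propensity e*(x) = P(A=1|X=x), and the conditional laws
   mu a x = law of Y given X = x, A = a. *)

Definition condmom (mu : bool -> X -> probability R R) (tau : R)
  (a : bool) (x : X) (q : R) : R :=
  fine (\int[mu a x]_y (rho_q tau y q)%:E)%E.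

Definition cond_cdf (mu : bool -> X -> probability R R) (a : bool) (x : X)
  (q : R) : R := fine (mu a x [set y : R | y <= q]).

Definition Jstar (mu : bool -> X -> probability R R) (tau : R)
  (nustar : bool -> X -> R) (a : bool) (x : X) : R :=
  derive1 (condmom mu tau a x) (nustar a x).

(* alpha*_a(x) = first row of J*_a(x)^{-1}; for m = 0 this is 1 / J*_a(x) *)
Definition alpha_star (mu : bool -> X -> probability R R) (tau : R)
  (nustar : bool -> X -> R) (a : bool) (x : X) : R :=
  (Jstar mu tau nustar a x)^-1.

Definition f_star (mu : bool -> X -> probability R R)
  (qstar : bool -> X -> R) (a : bool) (x : X) : R :=
  derive1 (cond_cdf mu a x) (qstar a x).

(* General pseudo-outcome psi(Z, e, alpha, nu) for m = 0 (kappa = nu). *)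
Definition psi (tau : R) (e : X -> R) (alpha nu : bool -> X -> R)
  (z : X * bool * R) : R :=
  let: (x, a, y) := z in
  nu true x - nu false x
  - (a%:R - e x) / (e x * (1 - e x)) * alpha a x * rho_q tau y (nu a x).

Definition psi_cqte (tau : R) (e : X -> R) (q f : bool -> X -> R)
  (z : X * bool * R) : R :=
  let: (x, a, y) := z in
  q true x - q false x
  + (a%:R - e x) / (e x * (1 - e x)) * (f a x)^-1 * rho_q tau y (q a x).

Definition L2 (PX : probability X R) (g : X -> R) : \bar R :=
  Lnorm PX 2%:E (EFin \o g).

Definition nuis_err (PX : probability X R) (G H : bool)
  (estar : X -> R) (alphastar nustar : bool -> X -> R)
  (e : X -> R) (alpha nu : bool -> X -> R) : \bar R :=
  (\sum_(a : bool)
     (L2 PX (nu a \- nustar a)%R * L2 PX (e \- estar)%R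
      + (G%:R)%:E * L2 PX (alpha a \- alphastar a)%R * L2 PX (nu a \- nustar a)%R
      + (H%:R)%:E * L2 PX (nu a \- nustar a)%R * L2 PX (nu a \- nustar a)%R))%E.

(* Boundedness Assumption for m = 0 on a set Xi of nuisance realizations
   (e, alpha, nu), with constants c1..c5 and G, H in {0,1}.  The determinant
   condition is read as |det| > c4. *)
Definition boundedness (mu : bool -> X -> probability R R) (tau : R)
  (estar : X -> R) (nustar : bool -> X -> R)
  (Xi : set ((X -> R) * (bool -> X -> R) * (bool -> X -> R)))
  (c1 c2 c3 c4 c5 : R) (G H : bool) : Prop :=
  [/\ 0 < c1, 0 <= c2, 0 <= c3, 0 < c4 & 0 <= c5] /\
  forall e alpha nu, Xi (e, alpha, nu) ->
  forall (a : bool) (x : X),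
    (c1 <= estar x <= 1 - c1) /\ (c1 <= e x <= 1 - c1) /\
    forall t : R, 0 <= t <= 1 ->
    forall nb : R, nb = (1 - t) * nustar a x + t * nu a x ->
      [/\ derivable (condmom mu tau a x) nb 1,
          `|derive1 (condmom mu tau a x) nb| <= c2 * G%:R,
          derivable (derive1 (condmom mu tau a x)) nb 1 &
          `|derive1 (derive1 (condmom mu tau a x)) nb| <= c3 * H%:R] /\
      c4 < `|derive1 (condmom mu tau a x) nb| /\
      (forall y : R, `|rho_q tau y nb| <= c5).

End CQTE.

(* Main.v *)
Require Import Defs.
From mathcomp Require Import all_boot all_order all_algebra.
From mathcomp Require Import all_classical all_reals all_analysis.
From mathcomp Require Import lra.
Import Order.TTheory GRing.Theory Num.Theory.
Import numFieldNormedType.Exports.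
Local Open Scope classical_set_scope.
Local Open Scope ring_scope.

Lemma condmomE (R : realType) d (X : measurableType d)
  (mu : bool -> X -> probability R R) tau a x q :
  condmom mu tau a x q = tau - cond_cdf mu a x q.
Proof.
rewrite /condmom /cond_cdf /rho_q.
set A := [set y : R | (y <= q)%R].
have mA : measurable A.
  have := @measurable_itv R `]-oo, q]; congr measurable.
have -> : (fun y : R => (tau - ((y <= q)%R)%:R)%:E) =
   (fun y => ((cst tau) y)%:E - (\1_A y)%:E)%E.
  apply: funext => y; rewrite /= indicE /= EFinB.
  rewrite EFinN; congr (_ - _%:E)%E; have -> : (y \in A) = (y <= q)%R by apply/idP/idP; rewrite in_setE.
  by [].
rewrite integralB_EFin //.
- rewrite lebesgue_integral_nonneg.integral_cstr.
rewrite (integral_indic _ _ mA).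
rewrite setIT; set m := (X in (_ * X)%E); have -> : m = 1%E by exact: probability_setT.
rewrite mule1.
  by rewrite fineB ?fin_num_measure.
- exact: measurableT.
- exact: measurableT.
- exact: finite_measure_integrable_cst.
- exact: integrable_indic.
Qed.
Lemma L2N (R : realType) d (X : measurableType d) (PX : probability X R) (g : X -> R) :
  L2 PX (\- g) = L2 PX g.
Proof.
rewrite /L2 -Lnorm_abse -[RHS]Lnorm_abse; congr Lnorm.
apply: funext => x /=.
by rewrite normrN.
Qed.

Lemma key (R : realType) (u e f : \bar R) (G H : bool) :
  (0 <= u)%E -> (0 <= e)%E -> (0 <= f)%E ->
  (u * e + (G%:R)%:E * f * u + (H%:R)%:E * u * u <= u * (e + f + u))%E.
Proof.
move=> u0 e0 f0.
rewrite ge0_muleDr ?adde_ge0 // ge0_muleDr //.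
apply: leeD; first apply: leeD.
- by [].
- case: G; first by rewrite mul1e muleC.
  by rewrite mul0e mul0e mule_ge0.
- case: H; first by rewrite mul1e.
  by rewrite mul0e mul0e mule_ge0.
Qed.

Theorem corollary1 (R : realType) (tau : R) (htau : 0 < tau < 1) :
  exists C : R, 0 < C /\
  forall (d : measure_display) (X : measurableType d)
    (PX : probability X R) (estar : X -> R)
    (mu : bool -> X -> probability R R) (qstar : bool -> X -> R),
    (forall x, 0 <= estar x <= 1) ->
    (* continuous (atomless) conditional distributions of Y | X=x, A=a *)
    (forall a x (y : R), mu a x [set y] = 0%E) ->
    (* q*_a(x) solves the moment equation, i.e. is the tau-quantile *)
    (forall a x, condmom mu tau a x (qstar a x) = 0) ->
    (* J*_a(x) exists and is invertible *)
    (forall a x, derivable (condmom mu tau a x) (qstar a x) 1 /\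
                 Jstar mu tau qstar a x != 0) ->
    (forall a x, alpha_star mu tau qstar a x = - (f_star mu qstar a x)^-1) /\
    (forall (e : X -> R) (q f : bool -> X -> R) (z : X * bool * R),
        psi tau e (fun a x => - (f a x)^-1) q z = psi_cqte tau e q f z) /\
    (forall Xi (c1 c2 c3 c4 c5 : R) (G H : bool),
      boundedness mu tau estar qstar Xi c1 c2 c3 c4 c5 G H ->
      forall (K : nat) (ehat : 'I_K -> X -> R) (qhat fhat : 'I_K -> bool -> X -> R),
      (2 <= K)%N ->
      (forall k, Xi (ehat k, (fun a x => - (fhat k a x)^-1), qhat k)) ->
      (\sum_(k < K)
          nuis_err PX G H estar (alpha_star mu tau qstar) qstar
            (ehat k) (fun a x => - (fhat k a x)^-1)%R (qhat k)
       <= C%:E * \sum_(k < K) \sum_(a : bool)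
            (L2 PX (qhat k a \- qstar a)%R *
             (L2 PX (ehat k \- estar)%R
              + L2 PX ((fun x => (fhat k a x)^-1) \- (fun x => (f_star mu qstar a x)^-1))%R
              + L2 PX (qhat k a \- qstar a)%R)))%E).
Proof.
exists 1; split; first exact: ltr01.
move=> d X PX estar mu qstar _ _ _ hder.
have P1 : forall a x, alpha_star mu tau qstar a x = - (f_star mu qstar a x)^-1.
  move=> a x; rewrite /alpha_star /f_star /Jstar.
  have -> : cond_cdf mu a x = cst tau - condmom mu tau a x.
    apply: funext => q /=.
    change (cond_cdf mu a x q = tau - condmom mu tau a x q); rewrite condmomE; lra.
  rewrite !derive1E deriveB ?derive_cst; last 2 first.
  - exact: derivable_cst.
  - exact: (hder a x).1.
  by rewrite sub0r invrN opprK.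
split; first exact: P1.
split.
  move=> e q f [[x a] y] /=; rewrite /psi /psi_cqte.
  by rewrite !mulrN mulNr opprK.
move=> Xi c1 c2 c3 c4 c5 G H _ K ehat qhat fhat _ _.
rewrite mul1e; apply: lee_sum => k _; rewrite /nuis_err; apply: lee_sum => a _.
have -> : ((fun x => - (fhat k a x)^-1) \- alpha_star mu tau qstar a)
   = \- ((fun x => (fhat k a x)^-1) \- (fun x => (f_star mu qstar a x)^-1)).
  apply: funext => x /=; rewrite P1; lra.
rewrite L2N; apply: key; exact: Lnorm_ge0.
Qed.
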